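(* Let $I$ be a countable index set with nested finite subsets $I_1\subset I_2\subset\cdots$, $\bigcup_nI_n=I$, let $W$ be a compact Hausdorff space, and let $m:X^{\mathbb{R}}\to C^*(W)$ be a minimal sequence measure function. Then for every real-valued continuous function $f\in C^*(W)$ and every $\varepsilon>0$ there exists $\mathbf{x}\in X^{\mathbb{R}}$ with $\|m(\mathbf{x})-f\|_\infty<\varepsilon$.
   Context: Frame compatible sequences: nonnegative real $\mathbf{x}$ with $0\le x_1\le|I_1|$, $0\le x_i-x_{i-1}\le|I_i\setminus I_{i-1}|$ ($i\ge2$); $X$ their set, $X^+=\{c\mathbf{x}:\mathbf{x}\in X,c\ge0\}$, $X^{\mathbb{R}}=\{\mathbf{x}^1-\mathbf{x}^2:\mathbf{x}^j\in X^+\}$. $\mathbf{x}\approx\mathbf{y}$ iff $\lim_n(x_n-y_n)/|I_n|=0$; for nonnegative sequences $\mathbf{y}\leqq\mathbf{x}$ iff $\liminf_n(x_n-y_n)/|I_n|\ge0$. For a compact Hausdorff $V$, $C^*(V)$ denotes real continuous functions on $V$. A sequence measure function is a linear map $m:X^{\mathbb{R}}\to C^*(V)$ with $m(\mathbf{x})=m(\mathbf{y})\iff\mathbf{x}\approx\mathbf{y}$ for $\mathbf{x},\mathbf{y}\in X^{\mathbb{R}}$, $m(\mathbf{x})\le m(\mathbf{y})$ pointwise $\iff\mathbf{x}\leqq\mathbf{y}$ for $\mathbf{x},\mathbf{y}\in X^+$, and $m((|I_1|,|I_2|,\dots))=1$. Such $m:X^{\mathbb{R}}\to C^*(W)$ is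 separable if for all $v\ne w$ in $W$ there is $\mathbf{x}\in X^{\mathbb{R}}$ with $m(\mathbf{x})(v)\ne m(\mathbf{x})(w)$; reducible if there is a compact $V\subsetneq W$ such that $\mathbf{x}\mapsto m(\mathbf{x})|_V$ is a sequence measure function $X^{\mathbb{R}}\to C^*(V)$; irreducible if not reducible; minimal if separable and irreducible. *)

(* Defs.v *)
From HB Require Import structures.
From mathcomp Require Import all_boot all_order all_algebra.
From mathcomp Require Import finmap.
From mathcomp Require Import all_classical all_reals all_analysis.
Set Implicit Arguments. Unset Strict Implicit. Unset Printing Implicit Defensive.
Import Order.TTheory GRing.Theory Num.Theory.
Import numFieldNormedType.Exports.
Local Open Scope classical_set_scope.
Local Open Scope ring_scope.

(* A frame: nested finite subsets F 0 ⊆ F 1 ⊆ ... of a countable type I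
   whose union is I.  The paper's I_n is F (n-1): sequences are indexed from 0. *)
Definition frame (I : countType) (F : nat -> {fset I}) : Prop :=
  (forall n, (F n `<=` F n.+1)%fset) /\ (forall i : I, exists n, i \in F n).

Section Seq.
Variables (R : realType) (I : countType) (F : nat -> {fset I}).

Definition card_frame (n : nat) : R := (#|` F n|)%:R.

Definition frame_compatible (x : nat -> R) : Prop :=
  (0 <= x 0 /\ x 0 <= card_frame 0) /\
  (forall n, 0 <= x n.+1 - x n /\ x n.+1 - x n <= (#|` (F n.+1 `\` F n)%fset|)%:R).

Definition Xplus (x : nat -> R) : Prop :=
  exists c y, 0 <= c /\ frame_compatible y /\ x = (fun n => c * y n).

Definition XR (x : nat -> R) : Prop :=
  exists x1 x2, Xplus x1 /\ Xplus x2 /\ x = (fun n => x1 n - x2 n).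

Definition seq_approx (x y : nat -> R) : Prop :=
  (x n - y n) / card_frame n @[n --> \oo] --> 0.

Definition seq_leqq (y x : nat -> R) : Prop :=
  (0 <= limn_einf (fun n => ((x n - y n) / card_frame n)%:E))%E.

Definition full_seq : nat -> R := card_frame.

(* m : X^R -> C*(V), where m(x)|_V is the restriction to the subset V of W
   (with the subspace topology). *)
Definition smf_on (W : topologicalType) (V : set W) (m : (nat -> R) -> W -> R)
  : Prop :=
  (forall (a b : R) x y, XR x -> XR y -> forall w, V w ->
      m (fun n => a * x n + b * y n) w = a * m x w + b * m y w) /\
  (forall x, XR x -> {within V, continuous (m x)}) /\
  (forall x y, XR x -> XR y ->
      ((forall w, V w -> m x w = m y w) <-> seq_approx x y)) /\
  (forall x y, Xplus x -> Xplus y ->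
      ((forall w, V w -> m x w <= m y w) <-> seq_leqq x y)) /\
  (forall w, V w -> m full_seq w = 1).

Definition seq_measure_function (W : topologicalType) (m : (nat -> R) -> W -> R)
  : Prop := smf_on [set: W] m.

Definition smf_separable (W : topologicalType) (m : (nat -> R) -> W -> R) : Prop :=
  forall v w : W, v <> w -> exists x, XR x /\ m x v <> m x w.

Definition smf_reducible (W : topologicalType) (m : (nat -> R) -> W -> R) : Prop :=
  exists V : set W, compact V /\ V `<` [set: W] /\ smf_on V m.

Definition smf_minimal (W : topologicalType) (m : (nat -> R) -> W -> R) : Prop :=
  smf_separable m /\ ~ smf_reducible m.

End Seq.

Definition sup_norm (R : realType) (W : topologicalType) (f : W -> R) : R :=
  sup (range (fun w => `|f w|)).

(* Main.v *)
Require Import Defs.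
From HB Require Import structures.
From mathcomp Require Import all_boot all_order all_algebra.
From mathcomp Require Import finmap.
From mathcomp Require Import all_classical all_reals all_analysis.
From mathcomp Require Import ring lra.
Import Order.TTheory GRing.Theory Num.Theory.
Import numFieldNormedType.Exports.
Local Open Scope classical_set_scope.
Local Open Scope ring_scope.

Lemma einf_ge0P (R : realType) (a : nat -> R) :
  (0 <= limn_einf (fun n => (a n)%:E))%E <->
  (forall e, 0 < e -> exists N, forall n, (N <= n)%N -> - e < a n).
Proof.
have E : limn_einf (fun n => (a n)%:E) =
   ereal_sup (range (einfs (fun n => (a n)%:E))).
  by rewrite limn_einf_lim; apply/cvg_lim => //; exact: cvg_einfs_sup.
rewrite E; split.
- move=> h e e0.
  have : ((- e)%:E < ereal_sup (range (einfs (fun n => (a n)%:E))))%E.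
    by apply: (lt_le_trans _ h); rewrite lte_fin; lra.
  move=> /ereal_sup_gt [_ [N _ <-]] hN; exists N => n Nn.
  rewrite -lte_fin (lt_le_trans hN) //; apply: ereal_inf_lbound.
  by exists n.
- move=> h; apply/lee_subgt0Pr => e e0; rewrite sub0e.
  have [N hN] := h e e0.
  apply: (@le_trans _ _ (einfs (fun n => (a n)%:E) N)); last by apply: ereal_sup_ubound; exists N.
  rewrite /einfs /=.
  apply: le_ereal_inf_tmp => _ [n /= Nn <-]; rewrite lee_fin.
  by apply/ltW; exact: hN.
Qed.


Section Part1.
Variables (R : realType) (I : countType) (F : nat -> {fset I}).
Hypothesis hF : frame F.

Let c n : R := card_frame R F n.
Implicit Types (x y z u : nat -> R).
Let d n : R := (#|` (F n.+1 `\` F n)%fset|)%:R.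

Lemma c_ge0 n : 0 <= c n. Proof. by rewrite /c /card_frame ler0n. Qed.
Lemma d_ge0 n : 0 <= d n. Proof. by rewrite /d ler0n. Qed.

Lemma d_eq n : d n = c n.+1 - c n.
Proof.
rewrite /d /c /card_frame cardfsDS; last exact: hF.1.
by rewrite natrB // fsubset_leq_card //; exact: hF.1.
Qed.

Definition bnd (x : nat -> R) (C : R) :=
  0 <= C /\ `|x 0%N| <= C * c 0 /\ forall n, `|x n.+1 - x n| <= C * d n.

Lemma fc_bnd y : frame_compatible F y -> bnd y 1.
Proof.
move=> [[y0 y0']] yS; split => //; split.
  by rewrite mul1r ger0_norm.
by move=> n; have [h1 h2] := yS n; rewrite mul1r ger0_norm.
Qed.

Lemma XR_bnd x : XR F x -> exists C, bnd x C.
Proof.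
move=> [x1 [x2 [[c1 [y1 [c1p [fy1 ->]]]] [[c2 [y2 [c2p [fy2 ->]]]] ->]]]].
have [_ [b1 b1']] := fc_bnd _ fy1; have [_ [b2 b2']] := fc_bnd _ fy2.
exists (c1 + c2); split; first lra.
have c0p := c_ge0 0.
move: fy1 fy2 => [[y10 y10'] y1S] [[y20 y20'] y2S]; split.
  rewrite ler_norml; apply/andP; split; nra.
move=> n; have := y1S n; have := y2S n; have := d_ge0 n.
move=> dp [h1 h1'] [h2 h2'].
rewrite ler_norml; apply/andP; split; nra.
Qed.

Lemma fc_c : frame_compatible F c.
Proof.
split; first by split; [exact: c_ge0|].
by move=> n; rewrite -d_eq; split; [exact: d_ge0|].
Qed.

Lemma bnd_XR x C : bnd x C -> XR F x.
Proof.
move=> [C0 [b0 bS]].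
pose C' := C + 1.
have C'p : 0 < C' by rewrite /C'; lra.
pose p n := (x n + C' * c n) / (2 * C').
have C2 : 0 < 2 * C' by lra.
have hC : C <= C' by rewrite /C'; lra.
exists (fun n => (2 * C') * p n), (fun n => C' * c n); split; last split.
- exists (2 * C'), p; split; first lra; split => //.
  split.
    have c0p := c_ge0 0.
    move: b0; rewrite ler_norml => /andP [h1 h2].
    have hh : C * c 0 <= C' * c 0 by rewrite ler_wpM2r.
    rewrite /p; split; first by rewrite divr_ge0 //; nra.
    by rewrite ler_pdivrMr //; nra.
  move=> n; have := bS n; rewrite ler_norml => /andP [h1 h2].
  have dn := d_ge0 n.
  have hh : C * d n <= C' * d n by rewrite ler_wpM2r.
  rewrite d_eq in h1 h2 dn hh *.
  rewrite /p -mulrBl; split; first by rewrite divr_ge0 //; lra.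
  rewrite ler_pdivrMr // -/(d n) d_eq; nra.
- exists C', c; split; first lra; split => //; exact: fc_c.
- apply: funext => n; rewrite /p mulrC divfK; last by rewrite gt_eqF.
  lra.
Qed.

Lemma XR_full : XR F c.
Proof. apply: (@bnd_XR _ 1); exact: fc_bnd _ fc_c. Qed.

Lemma XR0 : XR F (fun _ => 0 : R).
Proof. by apply: (@bnd_XR _ 0); split => //; rewrite normr0 mul0r; split => // n; rewrite subr0 normr0 mul0r. Qed.

Lemma XR_lin (a b : R) x y : XR F x -> XR F y -> XR F (fun n => a * x n + b * y n).
Proof.
move=> /XR_bnd [C1 [C1p [b1 b1']]] /XR_bnd [C2 [C2p [b2 b2']]].
apply: (@bnd_XR _ (`|a| * C1 + `|b| * C2)); split.
  by rewrite addr_ge0 // mulr_ge0.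
split.
  rewrite (le_trans (ler_normD _ _)) // !normrM mulrDl -!mulrA.
  by rewrite lerD // ler_wpM2l.
move=> n.
have -> : a * x n.+1 + b * y n.+1 - (a * x n + b * y n)
          = a * (x n.+1 - x n) + b * (y n.+1 - y n) by ring.
rewrite (le_trans (ler_normD _ _)) // !normrM mulrDl -!mulrA.
by rewrite lerD // ler_wpM2l.
Qed.

Lemma XR_comp (g : R -> R) x : XR F x ->
  (forall a b, `|g a - g b| <= `|a - b|) -> (forall a, `|g a| <= `|a|) ->
  XR F (fun n => g (x n)).
Proof.
move=> /XR_bnd [C [Cp [b0 bS]]] gL g0.
apply: (@bnd_XR _ C); split => //; split; first exact: le_trans (g0 _) b0.
by move=> n; exact: le_trans (gL _ _) (bS n).
Qed.

Lemma XR_abs (x : nat -> R) : XR F x -> XR F (fun n => `|x n|).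
Proof.
move=> hx; apply: (@XR_comp (fun a => `|a|)) => //.
  by move=> a b; exact: ler_dist_dist.
by move=> a; rewrite normr_id.
Qed.

Lemma Xplus_XR (x : nat -> R) : Xplus F x -> XR F x.
Proof.
move=> hx; exists x, (fun _ => 0); split => //; split.
  by exists 0, c; split => //; split; [exact: fc_c| apply: funext => n; rewrite mul0r].
by apply: funext => n; rewrite subr0.
Qed.

Variables (W : topologicalType) (m : (nat -> R) -> W -> R).
Hypotheses (cW : compact [set: W]) (hm : seq_measure_function F m).


Lemma withinT_cont (f : W -> R) : {within setT, continuous f} -> continuous f.
Proof. by move=> /subspace_continuousP h x; have := h x Logic.I; rewrite withinET. Qed.

Lemma mcont x : XR F x -> continuous (m x).
Proof. by move=> hx; apply: withinT_cont; exact: hm.2.1. Qed.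

Lemma mlin (a b : R) x y w : XR F x -> XR F y ->
  m (fun n => a * x n + b * y n) w = a * m x w + b * m y w.
Proof. by move=> hx hy; apply: hm.1. Qed.

Lemma mZ (a : R) x w : XR F x -> m (fun n => a * x n) w = a * m x w.
Proof.
move=> hx; have := mlin a 0 x x w hx hx; rewrite mul0r addr0 => <-.
by congr m; apply: funext => n; rewrite mul0r addr0.
Qed.

Lemma mD x y w : XR F x -> XR F y -> m (fun n => x n + y n) w = m x w + m y w.
Proof.
move=> hx hy; have := mlin 1 1 x y w hx hy; rewrite !mul1r => <-.
by congr m; apply: funext => n; rewrite !mul1r.
Qed.

Lemma mB x y w : XR F x -> XR F y -> m (fun n => x n - y n) w = m x w - m y w.
Proof.
move=> hx hy; have := mlin 1 (-1) x y w hx hy; rewrite !mul1r !mulN1r => <-.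
by congr m; apply: funext => n; rewrite !mul1r mulN1r.
Qed.

Lemma mfull w : m c w = 1.
Proof. exact: hm.2.2.2.2. Qed.

Lemma XRc : XR F c.
Proof. exact: XR_full. Qed.

Lemma mconst (a : R) w : m (fun n => a * c n) w = a.
Proof. by rewrite mZ ?mfull ?mulr1 //; exact: XRc. Qed.

Lemma XR_add x y : XR F x -> XR F y -> XR F (fun n => x n + y n).
Proof.
move=> hx hy; have := XR_lin 1 1 _ _ hx hy.
by congr XR; apply: funext => n; rewrite !mul1r.
Qed.

Lemma XR_sub x y : XR F x -> XR F y -> XR F (fun n => x n - y n).
Proof.
move=> hx hy; have := XR_lin 1 (-1) _ _ hx hy.
by congr XR; apply: funext => n; rewrite !mul1r mulN1r.
Qed.

Lemma XR_scale (a : R) x : XR F x -> XR F (fun n => a * x n).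
Proof.
move=> hx; have := XR_lin a 0 _ _ hx hx.
by congr XR; apply: funext => n; rewrite mul0r addr0.
Qed.

Definition ev_nonneg (u : nat -> R) :=
  forall e, 0 < e -> exists N, forall n, (N <= n)%N -> - e < u n / c n.

Lemma mge0P u : XR F u -> (forall w, 0 <= m u w) <-> ev_nonneg u.
Proof.
move=> hu; have hu' := hu.
move: hu' => [x1 [x2 [h1 [h2 ue]]]].
have X1 := Xplus_XR _ h1; have X2 := Xplus_XR _ h2.
have E w : m u w = m x1 w - m x2 w by rewrite ue mB.
have := hm.2.2.2.1 x2 x1 h2 h1.
rewrite /seq_leqq einf_ge0P => [[H1 H2]].
split.
- move=> h e e0.
  have H : forall w, setT w -> m x2 w <= m x1 w.
    by move=> w _; have := h w; rewrite E subr_ge0.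
  by have [N hN] := H1 H e e0; exists N => n Nn; rewrite ue; exact: hN.
- move=> h w; rewrite E subr_ge0; apply: H2 => //.
  by move=> e e0; have [N hN] := h e e0; exists N => n Nn; move: (hN n Nn); rewrite ue.
Qed.

Lemma mge0_pt u : XR F u -> (forall n, 0 <= u n) -> forall w, 0 <= m u w.
Proof.
move=> hu h; apply: (proj2 (mge0P _ hu)) => e e0; exists 0%N => n _.
apply: (lt_le_trans (y := 0)); first by rewrite oppr_lt0.
by rewrite divr_ge0 // /c /card_frame ler0n.
Qed.

Lemma mle_pt x y : XR F x -> XR F y -> (forall n, x n <= y n) ->
  forall w, m x w <= m y w.
Proof.
move=> hx hy h w; rewrite -subr_ge0 -mB //.
by apply: mge0_pt; [exact: XR_sub| move=> n; rewrite subr_ge0].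
Qed.

Lemma c_mono n k : (n <= k)%N -> c n <= c k.
Proof.
elim: k => [|k IH]; first by rewrite leqn0 => /eqP ->.
rewrite leq_eqVlt => /orP [/eqP -> //|/IH h].
by apply: (le_trans h); have := d_ge0 k; rewrite d_eq subr_ge0.
Qed.

Lemma cpos (w0 : W) : exists N, forall n, (N <= n)%N -> 0 < c n.
Proof.
have [//|hn] := pselect (exists N, forall n, (N <= n)%N -> 0 < c n).
have c0 : c = fun _ => 0.
  apply: funext => k; apply/eqP; apply: contrapT => /eqP ck.
  apply: hn; exists k => n kn; apply: (lt_le_trans _ (c_mono _ _ kn)).
  move: ck => /negP ck; rewrite lt_neqAle (c_ge0 k) andbT; apply/eqP => h; apply: ck; by rewrite -h eqxx.
have := mfull w0; rewrite c0.
have -> : (fun _ : nat => 0 : R) = (fun n => 0 * c n) by apply: funext => n; rewrite mul0r.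
by rewrite mconst => /eqP; rewrite eq_sym oner_eq0.
Qed.

Definition V0 (w : W) := forall y, XR F y -> m (fun n => `|y n|) w = `|m y w|.

Lemma key u (w0 : W) : XR F u -> m u w0 < 0 -> exists w, V0 w /\ m u w < 0.
Proof.
move=> hu mu0.
have [N0 hN0] := cpos w0.
have nev : ~ ev_nonneg u.
  by move=> /(mge0P _ hu) h; have := h w0; rewrite leNgt mu0.
have [e [e0 he]] : exists e, 0 < e /\
    forall N, exists n, (N <= n)%N /\ u n / c n <= - e.
  apply: contrapT => hne; apply: nev => e e0.
  apply: contrapT => hN; apply: hne; exists e; split => // N.
  apply: contrapT => hn; apply: hN; exists N => n Nn.
  rewrite ltNge; apply/negP => hle; apply: hn; exists n; split => //.
pose S := [set n | (N0 <= n)%N /\ u n / c n <= - e].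
pose F0 := filter_from setT (fun N => [set n | (N <= n)%N /\ S n]).
have F0F : ProperFilter F0.
  apply: filter_from_proper.
    apply: filter_fromT_filter; first by exists 0%N.
    move=> i j; exists (maxn i j) => n [/= ijn Sn]; split; split => //.
      exact: leq_trans (leq_maxl i j) ijn.
    exact: leq_trans (leq_maxr i j) ijn.
  move=> N _; have [n [Nn hn]] := he (maxn N N0); exists n; split => /=.
    exact: leq_trans (leq_maxl N N0) Nn.
  by split => //; exact: leq_trans (leq_maxr N N0) Nn.
have [U [UU F0U]] := ultraFilterLemma F0F.
have US : U S by apply: F0U; exists 0%N => // n [].
have UN N : U [set n | (N <= n)%N] by apply: F0U; exists N => // n [].
have Upos : U [set n | 0 < c n].
  by apply: F0U; exists 0%N => // n [_ [N0n _]]; exact: hN0.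
pose good z := [/\ XR F z, (forall n, 0 <= z n) &
  forall eps, 0 < eps -> U [set n | z n < eps * c n]].
pose D := [set p : (nat -> R) * R | good p.1 /\ 0 < p.2].
pose B := fun p : (nat -> R) * R => [set w | m p.1 w < p.2].
pose G := filter_from D B.
have GF : ProperFilter G.
  apply: filter_from_proper.
    apply: filter_from_filter.
      exists ((fun _ => 0), 1); split => //=; split.
      - have -> : (fun _ : nat => 0 : R) = (fun n => 0 * c n).
          by apply: funext => n; rewrite mul0r.
        exact: XR_scale _ _ XRc.
      - by [].
      - by move=> eps eps0; apply: filterS Upos => n /= cn; rewrite mulr_gt0.
    move=> [z1 d1] [z2 d2] [[g1 z1p U1] d1p] [[g2 z2p U2] d2p] /=.
    exists ((fun n => z1 n + z2 n), Num.min d1 d2).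
      split; last by rewrite /= lt_min d1p d2p.
      split => /=.
      - exact: XR_add.
      - by move=> n; rewrite addr_ge0.
      - move=> eps eps0.
        have e2 : 0 < eps / 2 by rewrite divr_gt0.
        apply: filterS (filterI (U1 _ e2) (U2 _ e2)) => n /= [h1 h2].
        lra.
    move=> w; rewrite /B /= mD // lt_min => /andP [h1 h2].
    have := mge0_pt _ g1 z1p w; have := mge0_pt _ g2 z2p w.
    by move=> a b; split; lra.
  move=> [z dd] [[hz z0 zU] dp] /=.
  apply: contrapT => hne.
  have hge : forall w, 0 <= m (fun n => z n - dd * c n) w.
    move=> w; rewrite mB // ?mconst ?subr_ge0; last exact: XR_scale _ _ XRc.
    by rewrite leNgt; apply/negP => h; apply: hne; exists w.
  have d2 : 0 < dd / 2 by rewrite divr_gt0.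
  have [N hN] := (proj1 (mge0P _ (XR_sub _ _ hz (XR_scale dd _ XRc))) hge) (dd / 2) d2.
  have [n /= [[h1 h2] h3]] := filter_ex (filterI (filterI (UN N) (zU _ d2)) Upos).
  have := hN n h1; rewrite /=.
  have -> : (z n - dd * c n) / c n = z n / c n - dd.
    by field; rewrite gt_eqF.
  have : z n / c n < dd / 2 by rewrite ltr_pdivrMr // mulrC.
  lra.
have [w [_ clw]] := cW _ GF filterT.
have goodz z : good z -> m z w = 0.
  move=> [hz z0 zU]; apply/eqP; rewrite eq_le mge0_pt // andbT.
  rewrite leNgt; apply/negP => mzp.
  have d2 : 0 < m z w / 2 by rewrite divr_gt0.
  have GB : G (B (z, m z w / 2)) by apply: in_filter_from; split.
  have Nb : \forall w' \near w, m z w / 2 < m z w'.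
    by apply: cvgr_gt; [exact: (mcont _ hz w)| lra].
  have [w' /= [h1 h2]] := clw _ _ GB Nb.
  move: h1 h2; rewrite /B /=; lra.
exists w; split.
  move=> y hy.
  have hay := XR_abs _ hy.
  have [Uy|Uy] := in_ultra_setVsetC [set n | 0 <= y n] UU.
    have gz : good (fun n => `|y n| - y n).
      split.
      - exact: XR_sub.
      - by move=> n; rewrite subr_ge0 ler_norm.
      - move=> eps eps0; apply: filterS (filterI Uy Upos) => n /= [yn cn].
        by rewrite ger0_norm // subrr mulr_gt0.
    have P := mge0_pt _ hay (fun n => normr_ge0 (y n)) w.
    have := goodz _ gz; rewrite mB // => /eqP; rewrite subr_eq0 => /eqP E.
    by rewrite E in P *; rewrite ger0_norm.
  have gz : good (fun n => `|y n| + y n).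
    split.
    - exact: XR_add.
    - by move=> n; rewrite -lerBlDr sub0r ler_normr lexx orbT.
    - move=> eps eps0; apply: filterS (filterI Uy Upos) => n /= [yn cn].
      move/negP: yn; rewrite -ltNge => yn.
      by rewrite ltr0_norm // addNr mulr_gt0.
  have P := mge0_pt _ hay (fun n => normr_ge0 (y n)) w.
  have := goodz _ gz; rewrite mD // => /eqP; rewrite addr_eq0 => /eqP E.
  by rewrite E in P *; rewrite ler0_norm // -oppr_ge0.
pose z := fun n => Num.max (u n + e * c n) 0.
have hv : XR F (fun n => u n + e * c n) by exact: XR_add _ _ hu (XR_scale e _ XRc).
have gz : good z.
  split.
  - apply: (@XR_comp (fun a => Num.max a 0) _ hv).
    + move=> a b /=.
      have [ha|ha] := leP a 0; have [hb|hb] := leP b 0;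
      rewrite ler_norml; apply/andP; split;
      (case: (leP 0 (a - b)) => hab; [rewrite ger0_norm //|rewrite ltr0_norm //]); lra.
    + by move=> a /=; have [ha|ha] := leP a 0; rewrite ?normr0 ?normr_ge0.
  - by move=> n; rewrite le_max lexx orbT.
  - move=> eps eps0; apply: filterS (filterI US Upos) => n /= [[_ hn] cn].
    move: hn; rewrite ler_pdivrMr // => hn.
    rewrite /z (_ : Num.max _ _ = 0) ?mulr_gt0 //.
    apply/max_idPr; rewrite mulNr in hn; lra.
have := goodz _ gz => hz0.
have : m (fun n => u n + e * c n) w <= m z w.
  apply: mle_pt => //; first by case: gz.
  by move=> n; rewrite /z le_max lexx.
rewrite hz0 mD //; last exact: XR_scale _ _ XRc.
rewrite mconst; lra.
Qed.

Lemma key2 u : XR F u -> (forall w, V0 w -> 0 <= m u w) -> forall w, 0 <= m u w.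
Proof.
move=> hu h w; rewrite leNgt; apply/negP => hw.
have [w' [Vw' hw']] := key _ _ hu hw; have := h w' Vw'; lra.
Qed.

Lemma V0_closed : closed V0.
Proof.
have -> : V0 = \bigcap_(y in XR F) ((fun w => m (fun n => `|y n|) w - `|m y w|) @^-1` [set 0]).
  apply/seteqP; split => w.
    by move=> Vw y hy /=; rewrite Vw // subrr.
  by move=> h y hy; apply/eqP; rewrite -subr_eq0; apply/eqP; exact: h.
apply: closed_bigI => y hy; apply: preimage_closed; last exact: closed_eq.
move=> w _.
have H2 : {for w, continuous (fun w => `|m y w|)}.
  apply: (@continuous_comp _ _ _ (m y) (fun r : R => `|r|)); first exact: mcont.
  exact: norm_continuous.
exact: (continuousB (mcont _ (XR_abs _ hy) w) H2).
Qed.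

Lemma smf_V0 : smf_on F V0 m.
Proof.
split; first by move=> a b x y hx hy w _; exact: mlin.
split; first by move=> x hx; apply: continuous_subspaceT; exact: mcont.
split.
  move=> x y hx hy; split; last first.
    by move=> ap w _; exact: ((hm.2.2.1 x y hx hy).2 ap w Logic.I).
  move=> h; apply: (hm.2.2.1 x y hx hy).1 => w _.
  have h1 : 0 <= m (fun n => y n - x n) w.
    apply: key2 => [|w' Vw']; first exact: XR_sub.
    by rewrite mB // (h w' Vw') subrr.
  have h2 : 0 <= m (fun n => x n - y n) w.
    apply: key2 => [|w' Vw']; first exact: XR_sub.
    by rewrite mB // (h w' Vw') subrr.
  move: h1 h2; rewrite !mB //; lra.
split.
  move=> x y px py; split; last first.
    by move=> hl w _; exact: ((hm.2.2.2.1 x y px py).2 hl w Logic.I).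
  move=> h; apply: (hm.2.2.2.1 x y px py).1 => w _.
  have hx := Xplus_XR _ px; have hy := Xplus_XR _ py.
  rewrite -subr_ge0 -mB //; apply: key2 => [|w' Vw']; first exact: XR_sub.
  by rewrite mB // subr_ge0; exact: h.
by move=> w _; exact: mfull.
Qed.

Hypothesis hmin : smf_minimal F m.

Lemma V0_all w : V0 w.
Proof.
apply: contrapT => nw; apply: hmin.2; exists V0; split.
  exact: (subclosed_compact V0_closed cW).
split; last exact: smf_V0.
by split => // h; apply: nw; exact: h.
Qed.

Lemma mabs y w : XR F y -> m (fun n => `|y n|) w = `|m y w|.
Proof. by move=> hy; exact: V0_all. Qed.

Definition A (g : W -> R) := exists x, XR F x /\ forall w, m x w = g w.

Lemma A_const (a : R) : A (fun _ => a).
Proof. by exists (fun n => a * c n); split; [exact: XR_scale _ _ XRc| move=> w; exact: mconst]. Qed.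

Lemma A_lin (a b : R) g h : A g -> A h -> A (fun w => a * g w + b * h w).
Proof.
move=> [x [hx gx]] [y [hy hy']]; exists (fun n => a * x n + b * y n); split.
  exact: XR_lin.
by move=> w; rewrite mlin // gx hy'.
Qed.

Lemma A_abs g : A g -> A (fun w => `|g w|).
Proof.
move=> [x [hx gx]]; exists (fun n => `|x n|); split; first exact: XR_abs.
by move=> w; rewrite mabs // gx.
Qed.

Lemma max_abs (p q : R) : Num.max p q = 2^-1 * (p + q) + 2^-1 * `|p - q|.
Proof.
have [h|h] := leP p q.
  by rewrite ler0_norm ?subr_le0 //; field.
by rewrite gtr0_norm ?subr_gt0 //; field.
Qed.

Lemma min_abs (p q : R) : Num.min p q = 2^-1 * (p + q) + (- 2^-1) * `|p - q|.
Proof.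
have [h|h] := leP p q.
  by rewrite ler0_norm ?subr_le0 //; field.
by rewrite gtr0_norm ?subr_gt0 //; field.
Qed.

Lemma A_max g h : A g -> A h -> A (fun w => Num.max (g w) (h w)).
Proof.
move=> Ag Ah.
have := A_lin (2^-1) (2^-1) _ _ (A_lin 1 1 _ _ Ag Ah) (A_abs _ (A_lin 1 (-1) _ _ Ag Ah)).
move=> [x [hx e]]; exists x; split => // w; rewrite e max_abs.
by rewrite !mul1r mulN1r.
Qed.

Lemma A_min g h : A g -> A h -> A (fun w => Num.min (g w) (h w)).
Proof.
move=> Ag Ah.
have := A_lin (2^-1) (- 2^-1) _ _ (A_lin 1 1 _ _ Ag Ah) (A_abs _ (A_lin 1 (-1) _ _ Ag Ah)).
move=> [x [hx e]]; exists x; split => // w; rewrite e min_abs.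
by rewrite !mul1r mulN1r.
Qed.

Lemma A_cont g : A g -> continuous g.
Proof.
move=> [x [hx e]]; have -> : g = m x by apply: funext => w; rewrite e.
exact: mcont.
Qed.

Variable f : W -> R.
Hypothesis hf : continuous f.

Lemma interp s t : exists g, A g /\ g s = f s /\ g t = f t.
Proof.
have [[y [hy ne]]|] := pselect (exists y, XR F y /\ m y s <> m y t).
  have ne' : m y s - m y t != 0 by rewrite subr_eq0; apply/eqP.
  pose al := (f s - f t) / (m y s - m y t).
  pose be := f s - al * m y s.
  exists (fun w => al * m y w + be * 1); split.
    apply: A_lin; last exact: A_const.
    by exists y; split.
  rewrite /be mulr1; split; first ring.
  rewrite /al; field; exact: ne'.
move=> hn.
have st : s = t.
  apply: contrapT => nst; have [y [hy ne]] := hmin.1 s t nst.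
  by apply: hn; exists y.
by exists (fun _ => f s); split; [exact: A_const| rewrite -st].
Qed.

Lemma stepA s eps : 0 < eps ->
  exists g, A g /\ g s = f s /\ forall w, f w - eps < g w.
Proof.
move=> e0; apply: contrapT => hn.
pose D := [set g | A g /\ g s = f s].
pose B := fun g : W -> R => [set w | g w <= f w - eps].
pose G := filter_from D B.
have GF : ProperFilter G.
  apply: filter_from_proper.
    apply: filter_from_filter.
      by exists (fun _ => f s); split => //; exact: A_const.
    move=> g1 g2 [A1 s1] [A2 s2]; exists (fun w => Num.max (g1 w) (g2 w)).
      by split; [exact: A_max| rewrite s1 s2 maxxx].
    by move=> w; rewrite /B /= ge_max => /andP [].
  move=> g [Ag sg]; apply: contrapT => ne; apply: hn; exists g; split => //.
  split => // w; rewrite ltNge; apply/negP => h; apply: ne; exists w; exact: h.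
have [w [_ clw]] := cW _ GF filterT.
have [h [Ah [hs hw]]] := interp s w.
have GB : G (B h) by apply: in_filter_from.
have Nb : \forall w' \near w, - eps < h w' - f w'.
  have K0 : - eps < (h - f) w.
    by have -> : (h - f) w = h w - f w by []; rewrite hw subrr oppr_lt0.
  have K := @cvgr_gt R W (nbhs w) (nbhs_filter w) (h - f) _
    (continuousB (A_cont _ Ah w) (hf w)) (- eps) K0.
  by apply: filterS K => w'.
have [w' /= [h1 h2]] := clw _ _ GB Nb.
move: h1 h2; rewrite /B /=; lra.
Qed.

Lemma stepB eps : 0 < eps -> exists g, A g /\ forall w, `|g w - f w| < eps.
Proof.
move=> e0.
have [[w1 _]|nW] := pselect (exists w : W, True); last first.
  exists (fun _ => 0); split; first exact: A_const.
  by move=> w; exfalso; apply: nW; exists w.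
apply: contrapT => hn.
pose D := [set g | A g /\ forall w, f w - eps < g w].
pose B := fun g : W -> R => [set w | f w + eps <= g w].
pose G := filter_from D B.
have GF : ProperFilter G.
  apply: filter_from_proper.
    apply: filter_from_filter.
      by have [g [Ag [_ hg]]] := stepA w1 eps e0; exists g.
    move=> g1 g2 [A1 s1] [A2 s2]; exists (fun w => Num.min (g1 w) (g2 w)).
      split; first exact: A_min.
      by move=> w; rewrite lt_min s1 s2.
    by move=> w; rewrite /B /= le_min => /andP [].
  move=> g [Ag sg]; apply: contrapT => ne; apply: hn; exists g; split => //.
  move=> w; have := sg w; rewrite ltNge; move/negP => h1.
  have h2 : g w < f w + eps.
    by rewrite ltNge; apply/negP => h; apply: ne; exists w; exact: h.
  rewrite ltr_norml; apply/andP; split; lra.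
have [w [_ clw]] := cW _ GF filterT.
have [h [Ah [hw hlow]]] := stepA w eps e0.
have GB : G (B h) by apply: in_filter_from.
have Nb : \forall w' \near w, h w' - f w' < eps.
  have K0 : (h - f) w < eps.
    by have -> : (h - f) w = h w - f w by []; rewrite hw subrr.
  have K := @cvgr_lt R W (nbhs w) (nbhs_filter w) (h - f) _
    (continuousB (A_cont _ Ah w) (hf w)) eps K0.
  by apply: filterS K => w'.
have [w' /= [h1 h2]] := clw _ _ GB Nb.
move: h1 h2; rewrite /B /=; lra.
Qed.

End Part1.

Theorem theorem6p13 (R : realType) (I : countType) (F : nat -> {fset I})
  (W : topologicalType) (m : (nat -> R) -> W -> R) :
  frame F -> hausdorff_space W -> compact [set: W] ->
  seq_measure_function F m -> smf_minimal F m ->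
  forall f : W -> R, continuous f ->
  forall eps : R, 0 < eps ->
  exists x, XR F x /\ sup_norm (fun w => m x w - f w) < eps.
Proof.
move=> hF _ cW hm hmin f hf eps e0.
have e2 : 0 < eps / 2 by rewrite divr_gt0.
have [g [[x [hx gx]] hg]] := @stepB R I F hF W m cW hm hmin f hf _ e2.
exists x; split => //; rewrite /sup_norm.
have [[w1 _]|nW] := pselect (exists w : W, True).
  apply: (@le_lt_trans _ _ (eps / 2)); last lra.
  apply: ge_sup; first by exists `|m x w1 - f w1|; exists w1.
  by move=> r [w _ <-]; rewrite gx; apply/ltW.
have -> : range (fun w => `|m x w - f w|) = set0.
  by apply/seteqP; split => // r [w _ _]; exfalso; apply: nW; exists w.
by rewrite sup0.
Qed.
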